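(* For every $z\in\mathbb{R}$ there exists a topology $\tau_z\in\mathcal{L}$ with $C(\tau_z)=(-\infty,z]$ such that all spaces $(\mathbb{R},\tau_z)$, $z\in\mathbb{R}$, are completely metrizable and pairwise homeomorphic.
   Context: $\eta$ denotes the Euclidean topology on $\mathbb{R}$. $\mathcal{L}$ denotes the family of all Hausdorff topologies $\tau$ on $\mathbb{R}$ with $\tau\subset\eta$. For $\tau\in\mathcal{L}$ and $a\in\mathbb{R}$ let $\mathcal{N}_\tau(a)$ be the neighborhood filter of $a$ in $(\mathbb{R},\tau)$; $C(\tau)$ is the set of all $a\in\mathbb{R}$ with $\mathcal{N}_\tau(a)\neq\mathcal{N}_\eta(a)$. *)

(* Defs.v *)
From Stdlib Require Import Reals.
Open Scope R_scope.

Record is_topology (O : (R -> Prop) -> Prop) : Prop := {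
  top_full  : O (fun _ => True);
  top_empty : O (fun _ => False);
  top_inter : forall U V, O U -> O V -> O (fun x => U x /\ V x);
  top_union : forall F : (R -> Prop) -> Prop,
      (forall U, F U -> O U) -> O (fun x => exists U, F U /\ U x)
}.

Definition euclid_open (U : R -> Prop) : Prop :=
  forall x, U x -> exists e, 0 < e /\ forall y, Rabs (y - x) < e -> U y.

Definition hausdorff (O : (R -> Prop) -> Prop) : Prop :=
  forall x y, x <> y -> exists U V, O U /\ O V /\ U x /\ V y /\
    forall z, ~ (U z /\ V z).

Definition in_L (O : (R -> Prop) -> Prop) : Prop :=
  is_topology O /\ hausdorff O /\ (forall U, O U -> euclid_open U).

Definition nbhd (O : (R -> Prop) -> Prop) (a : R) (N : R -> Prop) : Prop :=
  exists U, O U /\ U a /\ forall x, U x -> N x.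

Definition Cset (O : (R -> Prop) -> Prop) (a : R) : Prop :=
  ~ (forall N, nbhd O a N <-> nbhd euclid_open a N).

Record is_metric (d : R -> R -> R) : Prop := {
  met_nonneg : forall x y, 0 <= d x y;
  met_zero   : forall x y, d x y = 0 <-> x = y;
  met_sym    : forall x y, d x y = d y x;
  met_tri    : forall x y z, d x z <= d x y + d y z
}.

Definition metric_open (d : R -> R -> R) (U : R -> Prop) : Prop :=
  forall x, U x -> exists e, 0 < e /\ forall y, d x y < e -> U y.

Definition metric_complete (d : R -> R -> R) : Prop :=
  forall u : nat -> R,
    (forall e, 0 < e -> exists N, forall m n, (N <= m)%nat -> (N <= n)%nat ->
        d (u m) (u n) < e) ->
    exists l, forall e, 0 < e -> exists N, forall n, (N <= n)%nat -> d (u n) l < e.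

Definition completely_metrizable (O : (R -> Prop) -> Prop) : Prop :=
  exists d, is_metric d /\ (forall U, O U <-> metric_open d U) /\ metric_complete d.

Definition homeomorphic (O1 O2 : (R -> Prop) -> Prop) : Prop :=
  exists f g : R -> R,
    (forall x, g (f x) = x) /\ (forall y, f (g y) = y) /\
    (forall U, O2 U -> O1 (fun x => U (f x))) /\
    (forall U, O1 U -> O2 (fun y => U (g y))).

(* Main.v *)
Require Import Defs.
From Stdlib Require Import Reals Lra Lia.
Open Scope R_scope.

Definition P2 (d : R -> R -> R) := forall x e, 0 < e -> exists del, 0 < del /\
  forall y, Rabs (y - x) < del -> d x y < e.
Definition P4 (d : R -> R -> R) z := forall a, z < a -> forall eps, 0 < eps ->
  exists e, 0 < e /\ forall y, d a y < e -> Rabs (y - a) < eps.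
Definition P5 (d : R -> R -> R) z := forall a, a <= z -> forall e, 0 < e ->
  exists y, d a y < e /\ 1 <= Rabs (y - a).

Lemma dself d a : is_metric d -> d a a = 0.
Proof. intros H; apply (met_zero d H); reflexivity. Qed.

Lemma ball_open d a r : is_metric d -> metric_open d (fun y => d a y < r).
Proof.
  intros H x Hx. exists (r - d a x); split; [lra|].
  intros y Hy. pose proof (met_tri d H a x y). lra.
Qed.

Lemma mo_topology d : is_topology (metric_open d).
Proof.
  constructor.
  - intros x _. exists 1; split; [lra| auto].
  - intros x [].
  - intros U V HU HV x [Ux Vx].
    destruct (HU x Ux) as [e1 [He1 H1]]. destruct (HV x Vx) as [e2 [He2 H2]].
    exists (Rmin e1 e2); split; [apply Rmin_pos; auto|].
    intros y Hy. split; [apply H1 | apply H2].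
    + pose proof (Rmin_l e1 e2); lra.
    + pose proof (Rmin_r e1 e2); lra.
  - intros F HF x [U [FU Ux]].
    destruct (HF U FU x Ux) as [e [He H]]. exists e; split; auto.
    intros y Hy. exists U; auto.
Qed.

Lemma mo_hausdorff d : is_metric d -> hausdorff (metric_open d).
Proof.
  intros H x y Hxy.
  assert (Hd : 0 < d x y).
  { pose proof (met_nonneg d H x y). destruct (Req_dec (d x y) 0) as [E|E].
    - exfalso; apply Hxy; apply (met_zero d H); auto.
    - lra. }
  exists (fun z => d x z < d x y / 2), (fun z => d y z < d x y / 2).
  split; [apply ball_open; auto|]. split; [apply ball_open; auto|].
  rewrite (dself d x H), (dself d y H).
  split; [lra|]. split; [lra|].
  intros z [A B]. pose proof (met_tri d H x z y). rewrite (met_sym d H z y) in H0. lra.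
Qed.

Lemma mo_coarse d : P2 d -> forall U, metric_open d U -> euclid_open U.
Proof.
  intros H2 U HU x Ux. destruct (HU x Ux) as [e [He H]].
  destruct (H2 x e He) as [del [Hdel Hd]]. exists del; split; auto.
Qed.

Lemma Cset_char d z : is_metric d -> P2 d -> P4 d z -> P5 d z ->
  forall a, Cset (metric_open d) a <-> a <= z.
Proof.
  intros Hm H2 H4 H5 a. split.
  - intros HC. destruct (Rle_dec a z) as [L|L]; [auto|]. exfalso. apply HC.
    intros N; split.
    + intros [U [OU [Ua HN]]]. exists U; split; [apply (mo_coarse d H2); auto|auto].
    + intros [U [OU [Ua HN]]]. destruct (OU a Ua) as [eps [Heps HU]].
      destruct (H4 a ltac:(lra) eps Heps) as [e [He Hb]].
      exists (fun y => d a y < e). split; [apply ball_open; auto|].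
      split; [rewrite (dself d a Hm); auto|].
      intros y Hy. apply HN, HU. apply Hb; auto.
  - intros L HC.
    assert (Hn : nbhd euclid_open a (fun y => Rabs (y - a) < 1)).
    { exists (fun y => Rabs (y - a) < 1). split; [|split; [rewrite Rminus_diag, Rabs_R0; lra|auto]].
      intros x Hx. exists (1 - Rabs (x - a)); split; [lra|].
      intros y Hy. replace (y - a) with ((y - x) + (x - a)) by ring.
      pose proof (Rabs_triang (y - x) (x - a)). lra. }
    apply HC in Hn. destruct Hn as [U [OU [Ua HN]]].
    destruct (OU a Ua) as [e [He HU]].
    destruct (H5 a L e He) as [y [Hy1 Hy2]].
    specialize (HN y (HU y Hy1)). lra.
Qed.

Lemma iso_open (d1 d2 : R -> R -> R) f :
  (forall x y, d2 (f x) (f y) = d1 x y) ->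
  forall U, metric_open d2 U -> metric_open d1 (fun x => U (f x)).
Proof.
  intros Hf U HU x Ux. destruct (HU (f x) Ux) as [e [He H]].
  exists e; split; auto. intros y Hy. apply H. rewrite Hf; auto.
Qed.

Definition dz (d : R -> R -> R) z x y := d (x - z) (y - z).

Lemma dz_metric d z : is_metric d -> is_metric (dz d z).
Proof.
  intros H; unfold dz; constructor.
  - intros; apply (met_nonneg d H).
  - intros x y; rewrite (met_zero d H); split; intros; lra.
  - intros; apply (met_sym d H).
  - intros; apply (met_tri d H).
Qed.

Lemma dz_P2 d z : P2 d -> P2 (dz d z).
Proof.
  intros H x e He. destruct (H (x - z) e He) as [del [Hd Hb]].
  exists del; split; auto. intros y Hy. apply Hb.
  replace (y - z - (x - z)) with (y - x) by ring; auto.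
Qed.

Lemma dz_P4 d z : P4 d 0 -> P4 (dz d z) z.
Proof.
  intros H a Ha eps He. destruct (H (a - z) ltac:(lra) eps He) as [e [He' Hb]].
  exists e; split; auto. intros y Hy. specialize (Hb (y - z) Hy).
  replace (y - z - (a - z)) with (y - a) in Hb by ring; auto.
Qed.

Lemma dz_P5 d z : P5 d 0 -> P5 (dz d z) z.
Proof.
  intros H a Ha e He. destruct (H (a - z) ltac:(lra) e He) as [y [H1 H2]].
  exists (y + z). unfold dz. replace (y + z - z) with y by ring.
  replace (y + z - a) with (y - (a - z)) by ring. auto.
Qed.

Lemma dz_complete d z : metric_complete d -> metric_complete (dz d z).
Proof.
  intros H u Hu. destruct (H (fun n => u n - z) Hu) as [l Hl].
  exists (l + z). unfold dz. replace (l + z - z) with l by ring. auto.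
Qed.

Definition p x := (x + Rabs x) / 2.
Definition G t := t / (1 + t ^ 4).
Definition T t := t * (1 - cos t) / 2.
Definition ph x := G (p x).
Definition ch x := p x * G (p x).
Definition ps x := x - p x - T (p x).
Definition d0 x y := Rabs (ph x - ph y) + Rabs (ch x - ch y) + Rabs (ps x - ps y).

Lemma den_pos t : 0 < 1 + t ^ 4.
Proof. replace (t ^ 4) with ((t * t) * (t * t)) by ring. nra. Qed.

Lemma G_eq t : G t * (1 + t ^ 4) = t.
Proof. unfold G. field. pose proof (den_pos t); lra. Qed.

Lemma p_neg x : x <= 0 -> p x = 0.
Proof. intros; unfold p; rewrite Rabs_left1; lra. Qed.
Lemma p_pos x : 0 <= x -> p x = x.
Proof. intros; unfold p; rewrite Rabs_right; lra. Qed.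
Lemma p_nonneg x : 0 <= p x.
Proof. destruct (Rle_dec x 0); [rewrite p_neg|rewrite p_pos]; lra. Qed.

Lemma G0 : G 0 = 0.
Proof. unfold G; unfold Rdiv; ring. Qed.
Lemma T0 : T 0 = 0.
Proof. unfold T, Rdiv; ring. Qed.
Lemma G_nonneg t : 0 <= t -> 0 <= G t.
Proof. intros; unfold G. pose proof (den_pos t). apply Rmult_le_pos; [auto| left; apply Rinv_0_lt_compat; auto]. Qed.
Lemma G_pos t : 0 < t -> 0 < G t.
Proof. intros; unfold G. apply Rdiv_lt_0_compat; auto. apply den_pos. Qed.
Lemma T_nonneg t : 0 <= t -> 0 <= T t.
Proof. intros; unfold T. pose proof (COS_bound t). nra. Qed.

Lemma neg_vals x : x <= 0 -> ph x = 0 /\ ch x = 0 /\ ps x = x.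
Proof. intros H; unfold ph, ch, ps; rewrite p_neg, G0, T0 by auto. repeat split; ring. Qed.
Lemma pos_vals x : 0 < x -> ph x = G x /\ ch x = x * G x /\ ps x = - T x.
Proof. intros H; unfold ph, ch, ps; rewrite p_pos by lra. repeat split; ring. Qed.

Lemma ph_nonneg x : 0 <= ph x.
Proof. apply G_nonneg, p_nonneg. Qed.
Lemma ps_nonpos x : ps x <= 0.
Proof.
  destruct (Rle_dec x 0) as [L|L].
  - rewrite (proj2 (proj2 (neg_vals x L))); auto.
  - rewrite (proj2 (proj2 (pos_vals x ltac:(lra)))). pose proof (T_nonneg x ltac:(lra)); lra.
Qed.
Lemma ph_pos_inv x : 0 < ph x -> 0 < x.
Proof.
  intros H. destruct (Rle_dec x 0) as [L|L]; [|lra].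
  rewrite (proj1 (neg_vals x L)) in H; lra.
Qed.

Lemma t3_le t : 0 <= t -> t ^ 3 <= 1 + t ^ 4.
Proof.
  intros H. destruct (Rle_dec t 1).
  - assert (t ^ 3 <= 1). { replace (t^3) with (t*t*t) by ring.
      assert (t*t <= 1) by nra. nra. }
    assert (0 <= t^4) by (apply pow_le; lra); lra.
  - replace (t^4) with (t^3 * t) by ring. assert (0 <= t^3) by (apply pow_le; lra). nra.
Qed.
Lemma t2_le t : t ^ 2 <= 1 + t ^ 4.
Proof. replace (t^4) with (t^2*t^2) by ring. assert (0 <= t^2) by (apply pow2_ge_0). nra. Qed.

Lemma ch_sq t : 0 <= t -> (t * G t) ^ 2 <= G t.
Proof.
  intros H. pose proof (G_eq t). pose proof (G_nonneg t H). pose proof (t3_le t H).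
  pose proof (den_pos t). set (g := G t) in *.
  assert ((t * g)^2 * (1 + t^4) <= g * (1 + t^4)).
  { replace ((t * g)^2 * (1 + t^4)) with (t^2 * g * (g * (1 + t^4))) by ring.
    rewrite H0. replace (t^2 * g * t) with (g * t^3) by ring. nra. }
  apply Rmult_le_reg_r with (1 + t^4); auto.
Qed.
Lemma ch_le1 t : 0 <= t -> t * G t <= 1.
Proof.
  intros H. pose proof (G_eq t). pose proof (t2_le t). pose proof (den_pos t).
  set (g := G t) in *.
  assert (t * g * (1 + t^4) <= 1 * (1 + t^4)).
  { replace (t * g * (1 + t^4)) with (t * (g * (1 + t^4))) by ring. rewrite H0. nra. }
  nra.
Qed.
Lemma tail_bd t : 1 <= t -> (G t + t * G t) * t <= 2.
Proof.
  intros H. pose proof (G_eq t). pose proof (t2_le t). pose proof (t3_le t ltac:(lra)).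
  pose proof (den_pos t). set (g := G t) in *.
  assert ((g + t * g) * t * (1 + t^4) <= 2 * (1 + t^4)).
  { replace ((g + t * g) * t * (1 + t^4)) with ((t + t^2) * (g * (1 + t^4))) by ring.
    rewrite H0. replace ((t + t^2) * t) with (t^2 + t^3) by ring. lra. }
  apply Rmult_le_reg_r with (1 + t^4); auto.
Qed.

Lemma d0_metric : is_metric d0.
Proof.
  unfold d0; constructor.
  - intros. pose proof (Rabs_pos (ph x - ph y)). pose proof (Rabs_pos (ch x - ch y)).
    pose proof (Rabs_pos (ps x - ps y)). lra.
  - intros x y; split.
    + intros H. pose proof (Rabs_pos (ph x - ph y)). pose proof (Rabs_pos (ch x - ch y)).
      pose proof (Rabs_pos (ps x - ps y)).
      assert (E1 : ph x = ph y).
      { destruct (Req_dec (ph x - ph y) 0); [lra|]. apply Rabs_no_R0 in H3. lra. }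
      assert (E2 : ch x = ch y).
      { destruct (Req_dec (ch x - ch y) 0); [lra|]. apply Rabs_no_R0 in H3. lra. }
      assert (E3 : ps x = ps y).
      { destruct (Req_dec (ps x - ps y) 0); [lra|]. apply Rabs_no_R0 in H3. lra. }
      destruct (Rle_dec x 0) as [Lx|Lx].
      * destruct (Rle_dec y 0) as [Ly|Ly].
        -- destruct (neg_vals x Lx) as [_ [_ A]]. destruct (neg_vals y Ly) as [_ [_ B]]. lra.
        -- destruct (neg_vals x Lx) as [A _]. destruct (pos_vals y ltac:(lra)) as [B _].
           pose proof (G_pos y ltac:(lra)). lra.
      * destruct (pos_vals x ltac:(lra)) as [A [B _]].
        pose proof (G_pos x ltac:(lra)).
        assert (Hy : 0 < y) by (apply ph_pos_inv; lra).
        destruct (pos_vals y Hy) as [A' [B' _]].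
        rewrite A, A' in E1. rewrite B, B', E1 in E2.
        apply Rmult_eq_reg_r with (G y); [auto|lra].
    + intros ->. repeat rewrite Rminus_diag. rewrite Rabs_R0. ring.
  - intros. rewrite (Rabs_minus_sym (ph x)), (Rabs_minus_sym (ch x)), (Rabs_minus_sym (ps x)). ring.
  - intros x y z.
    replace (ph x - ph z) with ((ph x - ph y) + (ph y - ph z)) by ring.
    replace (ch x - ch z) with ((ch x - ch y) + (ch y - ch z)) by ring.
    replace (ps x - ps z) with ((ps x - ps y) + (ps y - ps z)) by ring.
    pose proof (Rabs_triang (ph x - ph y) (ph y - ph z)).
    pose proof (Rabs_triang (ch x - ch y) (ch y - ch z)).
    pose proof (Rabs_triang (ps x - ps y) (ps y - ps z)). lra.
Qed.

Lemma cont_eps f x : continuity_pt f x -> forall e, 0 < e ->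
  exists del, 0 < del /\ forall y, Rabs (y - x) < del -> Rabs (f y - f x) < e.
Proof.
  intros H e He. destruct (H e He) as [del [Hd Hb]]. exists del; split; auto.
  intros y Hy. destruct (Req_dec x y) as [->|N].
  - rewrite Rminus_diag, Rabs_R0; auto.
  - apply (Hb y). split; [split; [exact I|auto]|]. simpl. unfold Rdist. auto.
Qed.

Lemma den_ne x : 1 + x ^ 4 <> 0.
Proof. pose proof (den_pos x); lra. Qed.

Lemma cph : continuity ph.
Proof. unfold ph, G, p; reg. intros; apply den_ne. Qed.
Lemma cch : continuity ch.
Proof. unfold ch, G, p; reg. intros; apply den_ne. Qed.
Lemma cps : continuity ps.
Proof. unfold ps, T, p; reg. Qed.

Lemma d0_P2 : P2 d0.
Proof.
  intros x e He.
  destruct (cont_eps ph x (cph x) (e/3) ltac:(lra)) as [d1 [H1 B1]].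
  destruct (cont_eps ch x (cch x) (e/3) ltac:(lra)) as [d2 [H2 B2]].
  destruct (cont_eps ps x (cps x) (e/3) ltac:(lra)) as [d3 [H3 B3]].
  exists (Rmin d1 (Rmin d2 d3)). split.
  { apply Rmin_pos; auto. apply Rmin_pos; auto. }
  intros y Hy. pose proof (Rmin_l d1 (Rmin d2 d3)). pose proof (Rmin_r d1 (Rmin d2 d3)).
  pose proof (Rmin_l d2 d3). pose proof (Rmin_r d2 d3).
  specialize (B1 y ltac:(lra)). specialize (B2 y ltac:(lra)). specialize (B3 y ltac:(lra)).
  unfold d0. rewrite (Rabs_minus_sym (ph x)), (Rabs_minus_sym (ch x)), (Rabs_minus_sym (ps x)). lra.
Qed.

Lemma d0_P4 : P4 d0 0.
Proof.
  intros a Ha eps Heps.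
  destruct (pos_vals a Ha) as [Pa [Ca Sa]].
  pose proof (G_pos a Ha) as Hg. set (g := G a) in *.
  set (e2 := eps * g / (2 * (1 + a))).
  assert (He2 : 0 < e2). { unfold e2. apply Rdiv_lt_0_compat; nra. }
  assert (Ke : (1 + a) * e2 = eps * g / 2). { unfold e2. field. lra. }
  exists (Rmin (g / 2) e2). split; [apply Rmin_pos; lra|].
  intros y Hy. pose proof (Rmin_l (g/2) e2). pose proof (Rmin_r (g/2) e2).
  unfold d0 in Hy.
  pose proof (Rabs_pos (ph a - ph y)) as A1. pose proof (Rabs_pos (ch a - ch y)) as A2.
  pose proof (Rabs_pos (ps a - ps y)) as A3.
  assert (Phy : g / 2 < ph y).
  { pose proof (Rle_abs (ph a - ph y)). rewrite Pa in *. lra. }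
  assert (Hyp : 0 < y) by (apply ph_pos_inv; lra).
  destruct (pos_vals y Hyp) as [Py [Cy _]].
  set (gy := G y) in *.
  assert (Id : (y - a) * gy = (ch y - ch a) + a * (g - gy)).
  { rewrite Cy, Ca. ring. }
  assert (Bd : Rabs ((y - a) * gy) <= Rabs (ch a - ch y) + a * Rabs (ph a - ph y)).
  { rewrite Id. eapply Rle_trans; [apply Rabs_triang|].
    rewrite Rabs_mult, (Rabs_right a) by lra. rewrite Rabs_minus_sym, Pa, Py. lra. }
  rewrite Rabs_mult, (Rabs_right gy) in Bd by lra.
  set (D := Rabs (ph a - ph y) + Rabs (ch a - ch y) + Rabs (ps a - ps y)) in *.
  assert (Rabs (ch a - ch y) + a * Rabs (ph a - ph y) <= (1 + a) * D).
  { unfold D. nra. }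
  assert ((1 + a) * D < (1 + a) * e2) by (apply Rmult_lt_compat_l; lra).
  assert (Rabs (y - a) * gy < eps * gy) by nra.
  apply Rmult_lt_reg_r with gy; lra.
Qed.

Lemma d0_P5 : P5 d0 0.
Proof.
  intros a Ha e He.
  set (b := - a).
  destruct (INR_unbounded (Rmax (Rmax b (2 / e)) 1)) as [n Hn].
  pose proof (Rmax_l (Rmax b (2/e)) 1). pose proof (Rmax_r (Rmax b (2/e)) 1).
  pose proof (Rmax_l b (2/e)). pose proof (Rmax_r b (2/e)).
  pose proof PI2_1. assert (HPI : 2 < PI) by lra. pose proof (pos_INR n).
  set (t1 := 0 + 2 * INR n * PI). set (t2 := PI + 2 * INR n * PI).
  assert (C1 : cos t1 = 1) by (unfold t1; rewrite cos_period; apply cos_0).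
  assert (C2 : cos t2 = -1) by (unfold t2; rewrite cos_period; apply cos_PI).
  assert (Tt1 : T t1 = 0) by (unfold T; rewrite C1; unfold Rdiv; ring).
  assert (Tt2 : T t2 = t2) by (unfold T; rewrite C2; field).
  assert (Ht1 : INR n <= t1) by (unfold t1; assert (0 <= INR n * (2*PI - 1)) by (apply Rmult_le_pos; lra); lra).
  assert (Hf : continuity (fun t => T t - b)) by (unfold T; reg).
  destruct (IVT_cor (fun t => T t - b) t1 t2 Hf ltac:(unfold t1, t2; lra)) as [y [Hy1 Hy2]].
  { rewrite Tt1, Tt2. assert (0 <= b) by (unfold b; lra). assert (t1 <= t2) by (unfold t1, t2; lra). assert (0 <= b * (t2 - b)) by (apply Rmult_le_pos; lra). lra. }
  assert (Hy0 : 0 < y) by lra.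
  destruct (neg_vals a Ha) as [Pa [Ca Sa]].
  destruct (pos_vals y Hy0) as [Py [Cy Sy]].
  exists y. split.
  - unfold d0. rewrite Pa, Ca, Sa, Py, Cy, Sy.
    assert (Ty : T y = b) by lra. rewrite Ty. unfold b.
    replace (a - - - a) with 0 by ring. rewrite Rabs_R0.
    pose proof (G_pos y Hy0).
    rewrite Rabs_left by lra. rewrite Rabs_left by nra.
    pose proof (tail_bd y ltac:(lra)).
    assert (2 / e * e = 2) by (field; lra).
    assert (e * y > 2) by nra.
    nra.
  - rewrite Rabs_right by lra. lra.
Qed.

Lemma lim_nonpos w S : Un_cv w S -> (forall n, w n <= 0) -> S <= 0.
Proof.
  intros H Hw. destruct (Rle_dec S 0) as [L|L]; auto.
  destruct (H S ltac:(lra)) as [N HN]. specialize (HN N (le_n N)). unfold Rdist in HN.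
  specialize (Hw N). pose proof (Rle_abs (S - w N)). rewrite Rabs_minus_sym in HN. lra.
Qed.

Lemma cauchy_comp (f : R -> R) u :
  (forall x y, Rabs (f x - f y) <= d0 x y) ->
  (forall e, 0 < e -> exists N, forall m n, (N <= m)%nat -> (N <= n)%nat -> d0 (u m) (u n) < e) ->
  Cauchy_crit (fun n => f (u n)).
Proof.
  intros Hf Hu e He. destruct (Hu e He) as [N HN]. exists N. intros n m Hn Hm.
  unfold Rdist. eapply Rle_lt_trans; [apply Hf|]. apply HN; auto.
Qed.

Lemma b_ph x y : Rabs (ph x - ph y) <= d0 x y.
Proof. unfold d0. pose proof (Rabs_pos (ch x - ch y)). pose proof (Rabs_pos (ps x - ps y)). lra. Qed.
Lemma b_ch x y : Rabs (ch x - ch y) <= d0 x y.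
Proof. unfold d0. pose proof (Rabs_pos (ph x - ph y)). pose proof (Rabs_pos (ps x - ps y)). lra. Qed.
Lemma b_ps x y : Rabs (ps x - ps y) <= d0 x y.
Proof. unfold d0. pose proof (Rabs_pos (ch x - ch y)). pose proof (Rabs_pos (ph x - ph y)). lra. Qed.

Lemma d0_complete : metric_complete d0.
Proof.
  intros u Hu.
  destruct (R_complete _ (cauchy_comp ph u b_ph Hu)) as [P HP].
  destruct (R_complete _ (cauchy_comp ps u b_ps Hu)) as [S HS].
  destruct (Rle_dec P 0) as [LP|LP].
  -
    exists S. assert (LS : S <= 0) by (apply (lim_nonpos _ _ HS); intros; apply ps_nonpos).
    destruct (neg_vals S LS) as [PS [CS SS]].
    intros e He.
    set (e' := Rmin (e/3) ((e/3)^2)).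
    assert (He' : 0 < e') by (apply Rmin_pos; [lra| apply pow_lt; lra]).
    destruct (HP e' He') as [N1 H1]. destruct (HS (e/3) ltac:(lra)) as [N2 H2].
    exists (max N1 N2). intros n Hn.
    specialize (H1 n ltac:(lia)). specialize (H2 n ltac:(lia)). unfold Rdist in H1, H2.
    pose proof (Rmin_l (e/3) ((e/3)^2)). pose proof (Rmin_r (e/3) ((e/3)^2)).
    unfold d0. rewrite PS, CS, SS.
    pose proof (ph_nonneg (u n)) as Q1.
    assert (Q2 : 0 <= ch (u n)) by (unfold ch; pose proof (p_nonneg (u n)); pose proof (G_nonneg _ (p_nonneg (u n))); nra).
    assert (Q3 : ch (u n) ^ 2 <= ph (u n)) by (unfold ch, ph; apply ch_sq, p_nonneg).
    rewrite !Rminus_0_r, (Rabs_right (ph (u n))), (Rabs_right (ch (u n))) by lra.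
    pose proof (Rle_abs (ph (u n) - P)).
    assert (ph (u n) < e/3) by (unfold e' in *; lra).
    assert (ch (u n) ^ 2 < (e/3)^2) by (unfold e' in *; lra).
    assert (ch (u n) < e/3). { destruct (Rlt_or_le (ch (u n)) (e/3)) as [?|Hc]; [auto|]. assert ((e/3)*(e/3) <= ch (u n) * ch (u n)) by (apply Rmult_le_compat; lra). assert (ch (u n) ^ 2 = ch (u n) * ch (u n)) by ring. assert ((e/3)^2 = (e/3)*(e/3)) by ring. lra. }
    lra.
  -
    destruct (HP (P/2) ltac:(lra)) as [N0 H0].
    assert (Pos : forall n, (N0 <= n)%nat -> P/2 < ph (u n) /\ 0 < u n).
    { intros n Hn. specialize (H0 n Hn). unfold Rdist in H0.
      pose proof (Rle_abs (P - ph (u n))). rewrite Rabs_minus_sym in H0.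
      split; [lra|]. apply ph_pos_inv; lra. }
    set (K := (1 + 2/P) * (2/P)).
    assert (HK : 0 < K) by (unfold K; apply Rmult_lt_0_compat; apply Rdiv_lt_0_compat || idtac; try lra;
      assert (0 < 2/P) by (apply Rdiv_lt_0_compat; lra); lra).
    assert (Cu : Cauchy_crit u).
    { intros eps Heps. destruct (Hu (eps / K) ltac:(apply Rdiv_lt_0_compat; lra)) as [N1 H1].
      exists (max N0 N1). intros n m Hn Hm. unfold Rdist.
      destruct (Pos n ltac:(lia)) as [Pn Un]. destruct (Pos m ltac:(lia)) as [Pm Um].
      specialize (H1 n m ltac:(lia) ltac:(lia)).
      set (y := u n) in *. set (y' := u m) in *.
      destruct (pos_vals y Un) as [Py [Cy _]]. destruct (pos_vals y' Um) as [Py' [Cy' _]].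
      assert (Id : (y - y') * ph y = (ch y - ch y') + y' * (ph y' - ph y)).
      { rewrite Cy, Cy', Py, Py'. ring. }
      assert (Hy'b : y' < 2 / P).
      { pose proof (ch_le1 y' ltac:(lra)). rewrite <- Cy' in H. rewrite Cy', <- Py' in H.
        assert (y' * (P/2) < 1) by nra.
        apply Rmult_lt_reg_r with (P/2); [lra|]. replace (2 / P * (P/2)) with 1 by (field; lra). lra. }
      assert (Bd : Rabs ((y - y') * ph y) <= Rabs (ch y - ch y') + y' * Rabs (ph y - ph y')).
      { rewrite Id. eapply Rle_trans; [apply Rabs_triang|].
        rewrite Rabs_mult, (Rabs_right y') by lra. rewrite (Rabs_minus_sym (ph y')). lra. }
      rewrite Rabs_mult, (Rabs_right (ph y)) in Bd by lra.
      pose proof (b_ph y y'). pose proof (b_ch y y'). pose proof (Rabs_pos (ph y - ph y')).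
      pose proof (Rabs_pos (y - y')).
      assert (Rabs (y - y') * (P/2) <= (1 + 2/P) * d0 y y') by nra.
      assert ((1 + 2/P) * d0 y y' < (1 + 2/P) * (eps / K)).
      { apply Rmult_lt_compat_l; auto. assert (0 < 2/P) by (apply Rdiv_lt_0_compat; lra). lra. }
      assert ((1 + 2/P) * (eps / K) = eps * (P/2)) by (unfold K; field; split; lra).
      apply Rmult_lt_reg_r with (P/2); lra. }
    destruct (R_complete u Cu) as [l Hl]. exists l.
    intros e He. destruct (d0_P2 l e He) as [del [Hd B]].
    destruct (Hl del Hd) as [N HN]. exists N. intros n Hn.
    rewrite (met_sym d0 d0_metric). apply B. apply HN; auto.
Qed.

Theorem proposition5 :
  exists tau : R -> (R -> Prop) -> Prop,
    (forall z, in_L (tau z) /\ (forall a, Cset (tau z) a <-> a <= z)) /\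
    (forall z, completely_metrizable (tau z)) /\
    (forall z w, homeomorphic (tau z) (tau w)).
Proof.
  exists (fun z => metric_open (dz d0 z)).
  assert (M : forall z, is_metric (dz d0 z)) by (intros; apply dz_metric, d0_metric).
  split; [|split].
  - intros z. split.
    + split; [apply mo_topology|]. split; [apply mo_hausdorff, M|].
      apply mo_coarse, dz_P2, d0_P2.
    + apply Cset_char; [apply M | apply dz_P2, d0_P2 | apply dz_P4, d0_P4 | apply dz_P5, d0_P5].
  - intros z. exists (dz d0 z). split; [apply M|]. split; [intros; reflexivity|].
    apply dz_complete, d0_complete.
  - intros z w. exists (fun x => x - z + w), (fun y => y - w + z).
    split; [intros; ring|]. split; [intros; ring|]. split.
    + apply iso_open. intros x y. unfold dz. f_equal; ring.
    + apply iso_open. intros x y. unfold dz. f_equal; ring.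
Qed.
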